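(* Let $X$ be a separable absolutely neighbourhood star-Hurewicz space. If $Y$ is a closed and discrete subset of $X$, then $|Y|<\mathfrak{b}$.
   Context: All spaces are regular. $St(A,\mathcal{U})=\bigcup\{U\in\mathcal{U}:U\cap A\neq\emptyset\}$. $\mathfrak{b}$ is the bounding number. $X$ is absolutely neighbourhood star-Hurewicz if for each sequence $(\mathcal{U}_n:n\in\omega)$ of open covers of $X$ and each dense subset $D$ of $X$ there is a sequence $(F_n:n\in\omega)$ of finite subsets of $D$ such that for any open sets $O_n$ with $F_n\subseteq O_n$ ($n\in\omega$), every $x\in X$ lies in $St(O_n,\mathcal{U}_n)$ for all but finitely many $n$. *)

(* Defs.v *)
From HB Require Import structures.
From mathcomp Require Import all_boot all_order.
From mathcomp Require Import all_classical all_reals topology.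
Import Order.TTheory.
Set Implicit Arguments. Unset Strict Implicit. Unset Printing Implicit Defensive.
Local Open Scope classical_set_scope.

Definition St {T : Type} (A : set T) (U : set (set T)) : set T :=
  \bigcup_(V in [set V | U V /\ V `&` A !=set0]) V.

Definition open_cover {T : topologicalType} (U : set (set T)) : Prop :=
  (forall V, U V -> open V) /\ \bigcup_(V in U) V = setT.

Definition separable (T : topologicalType) : Prop :=
  exists D : set T, countable D /\ dense D.

Definition abs_nbhd_star_Hurewicz (T : topologicalType) : Prop :=
  forall (U : nat -> set (set T)) (D : set T),
    (forall n, open_cover (U n)) -> dense D ->
    exists F : nat -> set T,
      (forall n, finite_set (F n) /\ F n `<=` D) /\
      forall O : nat -> set T,
        (forall n, open (O n) /\ F n `<=` O n) ->
        forall x : T, \forall n \near \oo, St (O n) (U n) x.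

Definition closed_discrete {T : topologicalType} (Y : set T) : Prop :=
  closed Y /\
  forall y, Y y -> exists W : set T, open W /\ W y /\ W `&` Y = [set y].

Definition le_star (f g : nat -> nat) : Prop := \forall n \near \oo, (f n <= g n)%N.

Definition unbounded_family (F : set (nat -> nat)) : Prop :=
  ~ exists g, forall f, F f -> le_star f g.

(* |A| < b, where b = min { |F| : F unbounded in (omega^omega, <=* ) }:
   every unbounded family has cardinality strictly larger than |A|
   (equivalently, by comparability of cardinals, not <= |A|). *)
Definition card_lt_bounding {T : Type} (A : set T) : Prop :=
  forall F : set (nat -> nat), unbounded_family F -> ~ (F #<= A)%card.

(* Main.v *)
Require Import Defs.
From HB Require Import structures.
From mathcomp Require Import all_boot all_order.
From mathcomp Require Import all_classical all_reals topology.
Local Open Scope classical_set_scope.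

Theorem mainTheorem10 (X : topologicalType) :
  regular_space X -> separable X -> abs_nbhd_star_Hurewicz X ->
  forall Y : set X, closed_discrete Y -> card_lt_bounding Y.
Proof.
move=> reg [D [cD dD]] H Y [clY Wd] F unbF leFY.
have [lab surjlab] : exists lab : X -> (nat -> nat), F `<=` lab @` Y.
  by apply/pcard_surjP.
have [[x0 Dx0]|D0] := pselect (D !=set0); last first.
  apply: unbF; exists point => f /surjlab [y Yy _].
  have : [set: X] `&` D !=set0 by apply: dD; [exists y|exact: openT].
  by move=> [z [_ Dz]]; case: D0; exists z.
have /countable_injP [eD eDinj] := cD.
pose d k := xget x0 [set x | D x /\ eD x = k].
have dK : forall x, D x -> d (eD x) = x.
  move=> x Dx; have : [set z | D z /\ eD z = eD x] (d (eD x)).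
    by apply: xgetPex; exists x.
  by move=> [Dd e]; apply: eDinj; rewrite ?inE.
have [W HW] : exists W : X -> set X, forall y, Y y ->
    open (W y) /\ W y y /\ W y `&` Y = [set y].
  have /choice [W HW] : forall y, exists W : set X, Y y ->
    open W /\ W y /\ W `&` Y = [set y].
    move=> y; have [Yy|nYy] := pselect (Y y).
      by have [W ?] := Wd y Yy; exists W.
    by exists set0.
  by exists W.
have WY : forall y z, Y y -> Y z -> W y z -> z = y.
  move=> y z Yy Yz Wyz; have [_ [_ e]] := HW y Yy.
  by have : (W y `&` Y) z by []; rewrite e.
have [N HN] : exists N : X -> set X, forall x,
    open (N x) /\ N x x /\ forall y, Y y -> y <> x -> ~ closure (N x) y.
  have /choice [N HN] : forall x, exists B : set X,
    open B /\ B x /\ forall y, Y y -> y <> x -> ~ closure B y.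
    move=> x.
    pose G := ~` (Y `\ x).
    have oG : open G.
      rewrite openE => z Gz; rewrite /interior.
      have [Yz|nYz] := pselect (Y z).
        have zx : z = x by apply: contrapT => zx; apply: Gz.
        have [oW [Wz _]] := HW z Yz.
        apply: (@filterS _ _ _ (W z)); last first.
          by apply: open_nbhs_nbhs; split.
        move=> u Wu [Yu ux]; apply: ux; rewrite zx in Wu Yz.
        exact: (WY x u Yz Yu Wu).
      apply: (@filterS _ _ _ (~` Y)); last first.
        by apply: open_nbhs_nbhs; split => //; exact: closed_openC.
      by move=> u nYu [].
    have Gx : G x by move=> [_ /= xx]; apply: xx.
    have : nbhs x G by apply: open_nbhs_nbhs; split.
    move=> /reg [A Ax cAG].
    rewrite nbhsE in Ax; case: Ax => B [oB Bx] BA.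
    exists B; split => //; split => // y Yy yx cBy.
    have : G y by apply: cAG; exact: closureS BA _ cBy.
    by apply.
  by exists N.
pose A y k := [set z | d k <> y -> ~ closure (N (d k)) z].
have oA : forall y k, open (A y k).
  move=> y k; have [e|ne] := pselect (d k = y).
    suff -> : A y k = setT by exact: openT.
    by apply/seteqP; split => // z _ /(_ e).
  suff -> : A y k = ~` closure (N (d k)).
    by apply: closed_openC; exact: closed_closure.
  by apply/seteqP; split => z; [move/(_ ne) | move=> h _].
pose E y m := [set z | forall k, (k <= m)%N -> A y k z].
have oE : forall y m, open (E y m).
  move=> y; elim=> [|m IH].
    suff -> : E y 0 = A y 0 by [].
    apply/seteqP; split => z; first by apply.
    by move=> Az k; rewrite leqn0 => /eqP ->.
  suff -> : E y m.+1 = E y m `&` A y m.+1 by apply: openI.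
  apply/seteqP; split => z.
    by move=> h; split; [move=> k km; apply: h; apply: leqW | apply: h].
  move=> [h1 h2] k; rewrite leq_eqVlt => /orP [/eqP -> //|km].
  by apply: h1.
have Eyy : forall y m, Y y -> E y m y.
  move=> y m Yy k _ dky; have [_ [_ hN]] := HN (d k).
  by apply: hN => // e; apply: dky; rewrite e.
pose V y n := W y `&` E y (lab y n).
pose U n := [set ~` Y] `|` [set V y n | y in Y].
have cU : forall n, open_cover (U n).
  move=> n; split.
    move=> B [->|[y Yy <-]]; first exact: closed_openC.
    by apply: openI; [case: (HW y Yy)|exact: oE].
  apply/seteqP; split => // z _.
  have [Yz|nYz] := pselect (Y z).
    exists (V z n); first by right; exists z.
    by split; [case: (HW z Yz) => _ []|exact: Eyy].
  by exists (~` Y) => //; left.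
have [F' [HF' PF']] := H U D cU dD.
have /choice [g Hg] : forall n, exists m, forall x, F' n x -> (eD x <= m)%N.
  move=> n; have [fin _] := HF' n.
  have [S eS] := finite_fsetP.1 fin.
  exists (\max_(x <- finmap.enum_fset S) eD x)%N => x; rewrite eS => xS.
  by apply: (@leq_bigmax_seq _ _ predT).
pose O n := \bigcup_(k in [set k | (k <= g n)%N]) N (d k).
have PO := PF' O.
have : forall x, \forall n \near \oo, St (O n) (U n) x.
  apply: PO => n; split.
    by apply: bigcup_open => k _; case: (HN (d k)).
  move=> x Fx; have [_ FD] := HF' n; have Dx := FD x Fx.
  exists (eD x); first exact: Hg.
  by rewrite dK //; case: (HN x) => _ [].
move=> {}PO.
have claim : forall y n, Y y -> St (O n) (U n) y ->
    (lab y n <= g n)%N \/ exists k, d k = y.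
  move=> y n Yy [B [UB [z [Bz Oz]]] By].
  case: UB => [Be|[y' Yy' Be]]; first by rewrite Be in By.
  rewrite -Be in By Bz.
  have yy' : y = y' by apply: (WY y' y Yy' Yy); case: By.
  rewrite -yy' in Bz.
  case: Oz => k /= kg Nz.
  have [le|lt] := leqP (lab y n) (g n); first by left.
  have [e|ne] := pselect (d k = y); first by right; exists k.
  exfalso; case: Bz => _ Ez.
  apply: (Ez k _ ne); first by apply: (leq_trans kg); exact: ltnW.
  exact: subset_closure.
apply: unbF.
exists (fun n => maxn (g n) (\max_(k < n.+1) lab (d k) n)%N).
move=> f /surjlab [y Yy <-]; rewrite /le_star.
have [[k dk]|nd] := pselect (exists k, d k = y).
  apply: filterS (nbhs_infty_ge k) => n kn.
  rewrite -dk; apply: leq_trans (leq_maxr _ _).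
  exact: (@leq_bigmax_cond _ predT (fun i : 'I_n.+1 => lab (d i) n) (Ordinal (kn : (k < n.+1)%N))).
apply: filterS (PO y) => n St_n.
case: (claim y n Yy St_n) => [h|//].
by apply: leq_trans h (leq_maxl _ _).
Qed.
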